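(* Let $T\in\mathcal B(\mathcal H)$ be left-invertible, with Cauchy dual $T'=T(T^*T)^{-1}$. The following are equivalent: (i) $T$ is a $2$-isometry and $T^*T(\ker T^* )\subseteq\ker T^*$; (ii) $T$ is a $2$-isometry and $T^*T(T(\mathcal H))\subseteq T(\mathcal H)$; (iii) $T'-2T+T^*T^2=0$; (iv) $(T^*T^2T^*-2TT^*+I)T=0$; (v) $T'(T^*T-I)=(T^*T-I)T$.
   Context: A $2$-isometry is $T$ with $I-2T^*T+T^{*2}T^2=0$. *)

(* Defs.v *)
(* Abstract (pre-)Hilbert-space setting: a vector space V over
   a numeric closed field C (e.g. the complex numbers) with a positive definite
   Hermitian inner product (linear in the first argument), and linear operators. *)
From HB Require Import structures.
From mathcomp Require Import all_boot all_order all_algebra.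
Set Implicit Arguments. Unset Strict Implicit. Unset Printing Implicit Defensive.
Import Order.TTheory GRing.Theory Num.Theory.
Local Open Scope ring_scope.

Section Defs.
Variables (C : numClosedFieldType) (V : lmodType C).

Definition inner_product (ip : V -> V -> C) : Prop :=
  [/\ forall (a : C) (x y z : V), ip (a *: x + y) z = a * ip x z + ip y z,
      forall x y : V, ip y x = (ip x y)^*,
      forall x : V, 0 <= ip x x &
      forall x : V, ip x x = 0 -> x = 0].

Definition is_adjoint (ip : V -> V -> C) (T Ts : V -> V) : Prop :=
  forall x y : V, ip (T x) y = ip x (Ts y).

Definition left_invertible (T : V -> V) : Prop :=
  exists L : {linear V -> V}, forall x, L (T x) = x.

Definition two_isometry (T Ts : V -> V) : Prop :=
  forall x : V, x - (Ts (T x)) *+ 2 + Ts (Ts (T (T x))) = 0.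

(* Cauchy dual T' = T (T^*T)^{-1}, where S = (T^*T)^{-1} *)
Definition cauchy_dual (T S : V -> V) : V -> V := fun x => T (S x).

Definition kerO (f : V -> V) : V -> Prop := fun x => f x = 0.
Definition ranO (f : V -> V) : V -> Prop := fun x => exists y, x = f y.

Definition maps_into (A : V -> V) (P : V -> Prop) : Prop :=
  forall x, P x -> P (A x).

End Defs.

(* Main.v *)
Require Import Defs.
From HB Require Import structures.
From mathcomp Require Import all_boot all_order all_algebra.
Import Order.TTheory GRing.Theory Num.Theory.
Local Open Scope ring_scope.

Lemma l1 (M : zmodType) (a b : M) : b - a *+ 2 + ((a - b) + a) = 0.
Proof. by rewrite mulr2n opprD !addrA subrK (addrAC b) subrr add0r addNr. Qed.
Lemma l2 (M : zmodType) (a b c : M) : a + b + c = c + b + a.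
Proof. by rewrite addrC (addrC a) addrA. Qed.
Lemma l3 (M : zmodType) (a b : M) : a - b = a *+ 2 - b - a.
Proof. by rewrite mulr2n addrAC addrK. Qed.
Lemma l4 (M : zmodType) (a b c : M) : a - b + c = 0 -> a = b - c.
Proof. by move/eqP; rewrite addr_eq0 subr_eq => /eqP ->; rewrite addrC. Qed.

Theorem mainTheorem3 (C : numClosedFieldType) (V : lmodType C)
    (ip : V -> V -> C) (T Ts : {linear V -> V}) (S : V -> V) :
  inner_product ip ->
  is_adjoint ip T Ts ->
  left_invertible T ->
  (* S = (T^*T)^{-1} *)
  cancel (fun x => Ts (T x)) S ->
  cancel S (fun x => Ts (T x)) ->
  let T' := cauchy_dual T S in
  [<-> (* (i) *)   two_isometry T Ts /\
                   maps_into (fun x => Ts (T x)) (kerO Ts);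
       (* (ii) *)  two_isometry T Ts /\
                   maps_into (fun x => Ts (T x)) (ranO T);
       (* (iii) T' - 2T + T^*T^2 = 0 *)
                   forall x, T' x - (T x) *+ 2 + Ts (T (T x)) = 0;
       (* (iv) (T^*T^2T^* - 2TT^* + I)T = 0 *)
                   forall x, Ts (T (T (Ts (T x)))) - (T (Ts (T x))) *+ 2 + T x = 0;
       (* (v) T'(T^*T - I) = (T^*T - I)T *)
                   forall x, T' (Ts (T x) - x) = Ts (T (T x)) - T x].
Proof.
move=> [ipL ipC ipP ipD] adj _ AS0 SA0 T'.
have AS : forall x, S (Ts (T x)) = x := AS0.
have SA : forall x, Ts (T (S x)) = x := SA0.
have Ainj : injective (fun x => Ts (T x)) := can_inj AS0.
have ip0l : forall z, ip 0 z = 0.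
  move=> z; have h := ipL 1 0 0 z; rewrite scale1r addr0 mul1r in h.
  by apply: (addrI (ip 0 z)); rewrite addr0 -h.
have ip0r : forall z, ip z 0 = 0 by move=> z; rewrite ipC ip0l conjC0.
have ipB : forall x y z, ip (x - y) z = ip x z - ip y z.
  move=> x y z; have := ipL (-1) y x z; rewrite scaleN1r mulN1r (addrC (- y)) => ->.
  by rewrite addrC.
have adjTs : forall y x, ip (Ts y) x = ip y (T x) by move=> y x; rewrite ipC -adj -ipC.
have orth : forall k w, Ts k = 0 -> ip k (T w) = 0 by move=> k w hk; rewrite -adjTs hk ip0l.
have orth' : forall k w, Ts k = 0 -> ip (T w) k = 0 by move=> k w hk; rewrite adj hk ip0r.
have S0 : S 0 = 0 by have := AS 0; rewrite !raddf0.
have SB : forall a b, S (a - b) = S a - S b.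
  move=> a b; apply: Ainj; by rewrite /= SA !raddfB /= !SA.
have kerran : forall e, Ts e = 0 -> (exists u, e = T u) -> e = 0.
  move=> e he [u eu]; rewrite eu in he.
  have : u = 0 by rewrite -(AS u) he S0.
  by move=> u0; rewrite eu u0 raddf0.
have TB : forall a b, T (a *+ 2 - b) = T a *+ 2 - T b by move=> a b; rewrite raddfB raddfMn.
set E := fun x => T' x - (T x) *+ 2 + Ts (T (T x)).
have TsE : two_isometry T Ts -> forall x, Ts (E x) = 0.
  move=> h x; rewrite /E /T' /cauchy_dual /= raddfD raddfB raddfMn /=. rewrite SA; exact: h.
have iii_iso : (forall x, E x = 0) -> two_isometry T Ts.
  move=> h x; have e : Ts (E x) = 0 by rewrite h raddf0.
  by rewrite /E /T' /cauchy_dual /= raddfD raddfB raddfMn /= SA in e.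
have fromran : two_isometry T Ts -> (forall x, exists u, Ts (T (T x)) = T u) ->
    forall x, E x = 0.
  move=> h hr x; apply: kerran; first exact: TsE.
  have [u eu] := hr x; exists (S x - x *+ 2 + u).
  have -> : T (S x - x *+ 2 + u) = T (S x) - T x *+ 2 + T u by rewrite raddfD raddfB raddfMn.
  by rewrite /E /T' /cauchy_dual /= eu.
have i_iii : two_isometry T Ts /\ maps_into (fun x => Ts (T x)) (kerO Ts) -> forall x, E x = 0.
  move=> [h hk]; apply: fromran => // x.
  set w := Ts (T (T x)); exists (S (Ts w)).
  set k := w - T (S (Ts w)).
  have Tk : Ts k = 0 by rewrite /k raddfB /= SA subrr.
  have : ip k k = 0.
    rewrite {2}/k ipB.
    have -> : ip w k = 0.
      rewrite /w adjTs adj adj.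
      have := hk k Tk; rewrite /kerO => ->; exact: ip0r.
    by rewrite orth' // subrr.
  move/ipD; rewrite /k => /eqP; rewrite subr_eq0 => /eqP //.
have ii_iii : two_isometry T Ts /\ maps_into (fun x => Ts (T x)) (ranO T) -> forall x, E x = 0.
  move=> [h hr]; apply: fromran => // x.
  have [u ->] := hr (T x) (ex_intro _ x erefl); by exists u.
have iii_i : (forall x, E x = 0) -> maps_into (fun x => Ts (T x)) (kerO Ts).
  move=> h y; rewrite /kerO => hy.
  apply: ipD; set z := Ts (Ts (T y)).
  rewrite {1}/z adjTs adjTs adj.
  have -> : Ts (T (T z)) = T (z *+ 2 - S z).
    have := h z; rewrite /E /T' /cauchy_dual /= => /eqP.
    rewrite addrC addr_eq0 => /eqP ->.
    by rewrite TB opprB.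
  exact: orth.
have iii_ii : (forall x, E x = 0) -> maps_into (fun x => Ts (T x)) (ranO T).
  move=> h y [x ->]; exists (x *+ 2 - S x).
  have := h x; rewrite /E /T' /cauchy_dual /= => /eqP.
  rewrite addrC addr_eq0 => /eqP ->.
  by rewrite TB opprB.
tfae.
- move=> H; have h := i_iii H; split; [exact: iii_iso | exact: iii_ii].
- exact: ii_iii.
- move=> h y; rewrite l2; move: (h (Ts (T y))); rewrite /T' /cauchy_dual /= AS.
  by [].
- move=> h x; rewrite /T' /cauchy_dual /= SB AS raddfB /=.
  have := h (S x); rewrite SA => /l4 ->; exact: l3.
- move=> h; have hE : forall x, E x = 0.
    move=> x; have e := h x; rewrite /T' /cauchy_dual /= SB AS raddfB /= in e.
    move/eqP: e; rewrite eq_sym subr_eq => /eqP e.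
    by rewrite /E /T' /cauchy_dual /= e l1.
  split; [exact: iii_iso | exact: iii_i].
Qed.
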